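(* Let $E$ be a directed graph such that each cycle is either without exits or extreme, and such that each infinite emitter lies on a cycle. If $H\subseteq E^0$ is hereditary and saturated, then no vertex of $R(H)-H$ lies on a cycle and each vertex of $R(H)-H$ is regular. Consequently, if $(H,S)$ is an admissible pair of $E$, then $B_H=S=\emptyset$.
   Context: A path is a vertex or finite sequence of edges $e_1\dots e_n$ with $\mathbf{r}(e_i)=\mathbf{s}(e_{i+1})$; $p^0$ is its vertex set. A cycle is a closed path of positive length whose edges have distinct sources; an exit of a cycle $c$ is an edge with source in $c^0$ not on $c$. A cycle $c$ is extreme if it has exits and for every path $p$ with $\mathbf{s}(p)\in c^0$ there is a path $q$ with $\mathbf{s}(q)=\mathbf{r}(p)$ and $\mathbf{r}(q)\in c^0$. An infinite emitter emits infinitely many edges; a sink emits none; a vertex is regular if it is neither. $u\ge v$ means there is a path (possibly of length 0) from $u$ to $v$; $R(V)=\{u\mid u\ge v$ for some $v\in V\}$. $H$ hereditary: closed under following paths; saturated: every regular $v$ with $\mathbf{r}(\mathbf{s}^{-1}(v))\subseteq H$ is in $H$. $B_H=\{v\in E^0-H\mid v$ is an infinite emitter and $\mathbf{s}^{-1}(v)\cap\mathbf{r}^{-1}(E^0-H)$ is nonempty and finite$\}$. An admissible pair is $(H,S)$ with $H$ hereditary saturated and $S\subseteq B_H$. *)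

(* Defs.v *)
(* A directed graph E = (E^0, E^1, s, r) is given by a vertex
   type V, an edge type Ed, and source/range maps s r : Ed -> V.
   Subsets of E^0 are predicates V -> Prop. *)
From Stdlib Require Import List.
Import ListNotations.
Set Implicit Arguments.

Section Graph.
Variables (V Ed : Type) (s r : Ed -> V).

Fixpoint is_path (p : list Ed) : Prop :=
  match p with
  | [] => True
  | e :: p' =>
      match p' with
      | [] => True
      | f :: _ => r e = s f /\ is_path p'
      end
  end.

Definition geq (u v : V) : Prop :=
  u = v \/
  exists (e : Ed) (p : list Ed),
    is_path (e :: p) /\ s e = u /\ r (last (e :: p) e) = v.

Definition is_cycle (c : list Ed) : Prop :=
  exists (e : Ed) (p : list Ed),
    c = e :: p /\ is_path c /\ r (last c e) = s e /\ NoDup (map s c).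

Definition cycle_verts (c : list Ed) (v : V) : Prop := In v (map s c).

Definition is_exit (c : list Ed) (e : Ed) : Prop :=
  cycle_verts c (s e) /\ ~ In e c.

Definition has_exit (c : list Ed) : Prop := exists e, is_exit c e.

Definition extreme (c : list Ed) : Prop :=
  has_exit c /\
  forall u v, cycle_verts c u -> geq u v ->
    exists w, cycle_verts c w /\ geq v w.

Definition finite_edges (P : Ed -> Prop) : Prop :=
  exists l : list Ed, forall e, P e -> In e l.

Definition infinite_emitter (v : V) : Prop :=
  ~ finite_edges (fun e => s e = v).

Definition sink (v : V) : Prop := forall e, s e <> v.

Definition regular (v : V) : Prop := ~ sink v /\ ~ infinite_emitter v.

Definition lies_on_cycle (v : V) : Prop :=
  exists c, is_cycle c /\ cycle_verts c v.

Definition RH (H : V -> Prop) (u : V) : Prop := exists v, H v /\ geq u v.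

Definition hereditary (H : V -> Prop) : Prop :=
  forall u v, H u -> geq u v -> H v.

Definition saturated (H : V -> Prop) : Prop :=
  forall v, regular v -> (forall e, s e = v -> H (r e)) -> H v.

Definition B_H (H : V -> Prop) (v : V) : Prop :=
  ~ H v /\ infinite_emitter v /\
  (exists e, s e = v /\ ~ H (r e)) /\
  finite_edges (fun e => s e = v /\ ~ H (r e)).

Definition admissible_pair (H S : V -> Prop) : Prop :=
  hereditary H /\ saturated H /\ (forall v, S v -> B_H H v).

End Graph.

(* Main.v *)
Require Import Defs.
From Stdlib Require Import List Classical.
Import ListNotations.

Section L.
Variables (V Ed : Type) (s r : Ed -> V).

Inductive reach : V -> V -> Prop :=
| rrefl u : reach u u
| rstep e w : reach (r e) w -> reach (s e) w.

Lemma reach_trans u v w : reach u v -> reach v w -> reach u w.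
Proof. induction 1; intros; auto. apply rstep; auto. Qed.

Lemma last_def (x : Ed) p d d' : last (x :: p) d = last (x :: p) d'.
Proof. revert x; induction p as [|y p IH]; intros x; simpl; auto.
  specialize (IH y). simpl in IH. destruct p; auto. Qed.

Lemma lemA e p : is_path s r (e :: p) -> forall x, In x (map s (e :: p)) ->
  forall d, reach x (r (last (e :: p) d)).
Proof.
  revert e; induction p as [|f p IH]; intros e Hp x Hx d.
  - simpl in Hx. destruct Hx as [<-|[]]. simpl. apply rstep, rrefl.
  - destruct Hp as [Hef Hp].
    change (last (e :: f :: p) d) with (last (f :: p) d).
    destruct Hx as [<-|Hx].
    + apply rstep. rewrite Hef. apply IH; auto. left; auto.
    + apply IH; auto.
Qed.

Lemma lemB e p : is_path s r (e :: p) -> forall x, In x (map s (e :: p)) ->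
  reach (s e) x.
Proof.
  revert e; induction p as [|f p IH]; intros e Hp x Hx.
  - destruct Hx as [<-|[]]. apply rrefl.
  - destruct Hp as [Hef Hp]. destruct Hx as [<-|Hx]. apply rrefl.
    apply rstep. rewrite Hef. apply IH; auto.
Qed.

Lemma lemC e p : is_path s r (e :: p) -> forall f, In f (e :: p) ->
  In (r f) (map s p) \/ r f = r (last (e :: p) e).
Proof.
  revert e; induction p as [|g p IH]; intros e Hp f Hf.
  - destruct Hf as [<-|[]]. right; auto.
  - destruct Hp as [Heg Hp].
    destruct Hf as [<-|Hf].
    + left. rewrite Heg. left; auto.
    + destruct (IH g Hp f Hf) as [H1|H1].
      * left. right. auto.
      * right. rewrite H1. change (last (e :: g :: p) e) with (last (g :: p) e).
        apply f_equal, last_def.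
Qed.

Lemma geq_reach u v : geq s r u v -> reach u v.
Proof.
  intros [<-|[e [p [Hp [Hs Hl]]]]]. apply rrefl.
  subst. apply (lemA _ _ Hp). left; auto.
Qed.

Lemma reach_geq u v : reach u v -> geq s r u v.
Proof.
  induction 1 as [u|e w Hr IH]. left; auto.
  right. destruct IH as [<-|[f [p [Hp [Hs Hl]]]]].
  - exists e, []. simpl. auto.
  - exists e, (f :: p). split. simpl. split; auto.
    split; auto. rewrite <- Hl. change (last (e :: f :: p) e) with (last (f :: p) e).
    apply f_equal, last_def.
Qed.

Lemma cyc_conn c : is_cycle s r c -> forall x y, cycle_verts s c x ->
  cycle_verts s c y -> reach x y.
Proof.
  intros [e [p [-> [Hp [Hl _]]]]] x y Hx Hy.
  apply reach_trans with (s e). rewrite <- Hl. apply (lemA _ _ Hp); auto.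
  apply (lemB _ _ Hp); auto.
Qed.

Lemma noexit_closed c : is_cycle s r c -> ~ has_exit s c ->
  forall u w, reach u w -> cycle_verts s c u -> cycle_verts s c w.
Proof.
  intros Hc Hne u w Hr. induction Hr as [u|f w Hr IH]; intros Hu; auto.
  apply IH.
  assert (Hf : In f c).
  { destruct (classic (In f c)) as [H|H]; auto. exfalso; apply Hne. exists f. split; auto. }
  destruct Hc as [e [p [-> [Hp [Hl _]]]]].
  destruct (lemC _ _ Hp f Hf) as [H1|H1].
  - unfold cycle_verts. right. auto.
  - unfold cycle_verts. rewrite H1, Hl. left; auto.
Qed.
End L.

Theorem lemma3p13 (V Ed : Type) (s r : Ed -> V)
  (Hcyc : forall c, is_cycle s r c -> ~ has_exit s c \/ extreme s r c)
  (Hinf : forall v, infinite_emitter s v -> lies_on_cycle s r v) :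
  (forall H : V -> Prop, hereditary s r H -> saturated s r H ->
     forall v, RH s r H v -> ~ H v -> ~ lies_on_cycle s r v /\ regular s v) /\
  (forall H S : V -> Prop, admissible_pair s r H S ->
     (forall v, ~ B_H s r H v) /\ (forall v, ~ S v)).
Proof.
  assert (P1 : forall H : V -> Prop, hereditary s r H ->
     forall v, RH s r H v -> ~ H v -> ~ lies_on_cycle s r v /\ regular s v).
  { intros H Hher v [h [Hh Hvh]] Hnv.
    assert (Hnc : ~ lies_on_cycle s r v).
    { intros [c [Hc Hv]]. apply Hnv.
      destruct (Hcyc c Hc) as [Hne|[_ Hext]].
      - assert (Hhc : cycle_verts s c h).
        { eapply noexit_closed; eauto. apply geq_reach; auto. }
        apply (Hher h); auto. apply reach_geq. eapply cyc_conn; eauto.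
      - destruct (Hext v h Hv Hvh) as [w [Hw Hhw]].
        assert (H w) by (apply (Hher h); auto).
        apply (Hher w); auto. apply reach_geq. eapply cyc_conn; eauto. }
    split; auto. split.
    - intros Hsink. destruct Hvh as [<-|[e [p [_ [Hs _]]]]]. auto.
      apply (Hsink e); auto.
    - intros Hie. auto. }
  split. { intros H Hher _. apply P1; auto. }
  intros H S [Hher [_ HS]].
  assert (NB : forall v, ~ B_H s r H v).
  { intros v [Hnv [Hie [_ [l Hl]]]].
    assert (Hex : exists e, s e = v /\ H (r e)).
    { apply NNPP. intros Hn. apply Hie. exists l. intros e He. apply Hl.
      split; auto. intros Hr. apply Hn. eauto. }
    destruct Hex as [e [Hse Hre]].
    assert (Rv : RH s r H v).
    { exists (r e). split; auto. right. exists e, []. simpl; auto. }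
    destruct (P1 H Hher v Rv Hnv) as [_ [_ Hreg]]. auto. }
  split; auto. intros v Sv. exact (NB v (HS v Sv)).
Qed.
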